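(* Let $M$ be a 3-dimensional contact Sub-Riemannian manifold, $W$ a $C^2$ $\Delta$-minimal surface and $\hat q\in W$ a characteristic point. Choose local coordinates $(x,y,z)$ near $\hat q=0$ with $W=\{z=0\}$, $X_1(\hat q)=\partial_x$, $X_2(\hat q)=\partial_y$, and write $a_i=dz(X_i)$, $i=1,2$ (so $a_i(0)=0$). Let $$A=\begin{pmatrix}\partial_xa_1&\partial_ya_1\\ \partial_xa_2&\partial_ya_2\end{pmatrix}(0)=\begin{pmatrix}a&b\\ c&d\end{pmatrix}.$$ If $\hat q$ is an isolated characteristic point and $\det A\ne0$, then $a=d=0$, $b=-c$, and $\det A=c^2>0$; that is, $\hat q$ is a zero of index $+1$ of the map $W\ni q\mapsto(X_1F(q),X_2F(q))$, $F=z$. In particular the structure functions $c_{12}^1,c_{12}^2$ do not affect the index.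
   Context: $M$: smooth 3-manifold with a contact rank-2 distribution $\Delta$ with orthonormal frame $X_1,X_2$; canonical 1-form $\omega$ with $\omega(\Delta)=0$, $d\omega(X_1,X_2)=1$; Reeb field $X_3$ ($\omega(X_3)=1$, $d\omega(V,X_3)=0$ for $V\in\Delta$); structure functions $[X_i,X_j]=-\sum_kc_{ij}^kX_k$. For $W=\{F=0\}$ ($F\in C^2$, $dF\ne0$), a characteristic point is a point where $X_1F=X_2F=0$. $W$ is $\Delta$-minimal if at all points of $W$ with $D_1=\sqrt{(X_1F)^2+(X_2F)^2}\neq0$: $\big(X_1^2F(X_2F)^2+X_2^2F(X_1F)^2-X_1FX_2F(X_1X_2+X_2X_1)F\big)D_1^{-3}+(c_{12}^2X_1F-c_{12}^1X_2F)D_1^{-1}=0$ (a property of $W$, independent of the defining function). *)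

(* Defs.v *)
(* Local coordinates: points of a chart
   of M are row vectors p : 'rV[R]_3 ; vector fields are maps 'rV_3 -> 'rV_3;
   1-forms are maps 'rV_3 -> 'rV_3 (components of the covector). *)
From HB Require Import structures.
From mathcomp Require Import all_boot all_order all_algebra.
From mathcomp Require Import all_classical all_reals all_analysis.
Set Implicit Arguments. Unset Strict Implicit. Unset Printing Implicit Defensive.
Import Order.TTheory GRing.Theory Num.Theory.
Import numFieldNormedType.Exports.
Local Open Scope classical_set_scope.
Local Open Scope ring_scope.

Section Defs.
Variable R : realType.
Notation V := 'rV[R]_3.

Fixpoint CkOn {W : normedModType R} (n : nat) (U : set V) (f : V -> W) : Prop :=
  match n with
  | O => forall p, U p -> {for p, continuous f}
  | S n' => (forall p, U p -> differentiable f p) /\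
            forall v : V, CkOn n' U (fun p => derive f p v)
  end.

Definition SmoothOn {W : normedModType R} (U : set V) (f : V -> W) : Prop :=
  forall n, CkOn n U f.

Definition vact (X : V -> V) (f : V -> R) : V -> R :=
  fun p => derive f p (X p).

Definition lie (X Y : V -> V) : V -> V :=
  fun p => derive Y p (X p) - derive X p (Y p).

Definition pair (w v : V) : R := \sum_(i < 3) w 0 i * v 0 i.

Definition dform (om : V -> V) (p : V) (v w : V) : R :=
  pair (derive om p v) w - pair (derive om p w) v.

End Defs.

(* Main.v *)
Require Import Defs.
From HB Require Import structures.
From mathcomp Require Import all_boot all_order all_algebra.
From mathcomp Require Import all_classical all_reals all_analysis.
From mathcomp Require Import lra ring.
Import Order.TTheory GRing.Theory Num.Theory.
Import numFieldNormedType.Exports.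
Local Open Scope classical_set_scope.
Local Open Scope ring_scope.

Section S.
Local Set Implicit Arguments.
Local Unset Strict Implicit.
Variable R : realType.
Notation V := 'rV[R]_3.

Lemma frechet (f : V -> R) x : differentiable f x -> forall eps : R, 0 < eps ->
  \forall h \near (0:V), `|f (h + x) - f x - 'd f x h| <= eps * `|h|.
Proof.
move=> /diff_locally dfx eps e0.
have := congr1 (fun g => g - (cst (f x) + 'd f x)) dfx.
rewrite [X in _ = X -> _]addrC addKr => Hk.
set k := (X in _ = X) in Hk.
have := littleoP [littleo of k] e0.
apply: filterS => h; move/(congr1 (fun g => g h)): Hk => /= <-.
by rewrite opprD addrA.
Qed.

Lemma frechet_ball (f : V -> R) x eps : differentiable f x -> 0 < eps ->
  exists2 r, 0 < r & forall h : V, `|h| < r ->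
     `|f (h + x) - f x - 'd f x h| <= eps * `|h|.
Proof.
move=> df e0; have /nbhs_norm0P [r r0 Hr] := @frechet f x df eps e0.
by exists r => // h hr; apply: Hr.
Qed.

Lemma sign_change (a b : R) : a * b < 0 -> Num.min a b <= 0 <= Num.max a b.
Proof.
move=> ab.
have [a0|a0] := leP a 0.
  have b0 : 0 <= b by rewrite leNgt; apply/negP => b0; nra.
  by rewrite ge_min a0 le_max b0 orbT.
have b0 : b <= 0 by rewrite leNgt; apply/negP => b0; nra.
by rewrite ge_min b0 orbT le_max ltW.
Qed.


Lemma norm_seg (s r : R) (v n : V) : 0 <= s ->
  `|s *: (v + r *: n)| <= s * (`|v| + `|r| * `|n|).
Proof.
move=> s0; rewrite normrZ ger0_norm // ler_wpM2l //.
by rewrite (le_trans (ler_normD _ _)) // normrZ.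
Qed.

Lemma aux_eq (x b : R) : b + 1 != 0 -> x / (2 * (b+1)) * b = x / 2 * (b / (b+1)).
Proof. by move=> h; field; rewrite h. Qed.

Lemma sign_aux (x s e c : R) : 0 < s -> 0 < e -> c != 0 ->
  `|x - s * (e * c)| <= s * (e * `|c| / 2) -> 0 < c * x.
Proof.
move=> s0 e0 c0; rewrite ler_norml => /andP [h1 h2].
have E : forall y : R, s * (e * y / 2) = s * (e * y) / 2 by move=> y; rewrite !mulrA.
have [cp|cn] := ltP 0 c.
  rewrite gtr0_norm // E in h1 h2.
  have sec : 0 < s * (e * c) by rewrite !mulr_gt0.
  apply: mulr_gt0 => //; lra.
have cn' : c < 0 by rewrite lt_neqAle c0 cn.
rewrite ltr0_norm // E in h1 h2.
have sec : 0 < s * (e * - c) by rewrite !mulr_gt0 // oppr_gt0.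
rewrite mulrN in sec.
have xn : x < 0 by lra.
by rewrite -mulrNN mulr_gt0 // oppr_gt0.
Qed.

Lemma curve (F : V -> R) (q0 v n : V) (eps rho : R) :
  differentiable F q0 -> F q0 = 0 -> 'd F q0 v = 0 -> 'd F q0 n != 0 ->
  0 < rho -> (forall h : V, `|h| < rho -> {for h + q0, continuous F}) -> 0 < eps ->
  exists2 d, 0 < d & forall s, 0 < s -> s < d ->
     exists2 r, `|r| <= eps & F (s *: (v + r *: n) + q0) = 0.
Proof.
move=> dF F0 dFv dFn rho0 Fc e0.
set c := 'd F q0 n.
set B := `|v| + eps * `|n|.
have B0 : 0 <= B by rewrite addr_ge0 ?mulr_ge0 // ltW.
have c0 : 0 < `|c| by rewrite normr_gt0.
set eta := eps * `|c| / (2 * (B + 1)).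
have eta0 : 0 < eta by rewrite /eta divr_gt0 ?mulr_gt0 //; lra.
have [r1 r10 Hf] := frechet_ball dF eta0.
set rr := Num.min rho r1.
have rr0 : 0 < rr by rewrite lt_min rho0 r10.
exists (rr / (B + 1)); first by rewrite divr_gt0 //; lra.
move=> s s0 sd.
have Hh : forall r, `|r| <= eps -> `|s *: (v + r *: n)| < rr.
  move=> r re; apply: (le_lt_trans (norm_seg _ _ _ (ltW s0))).
  have : s * (`|v| + `|r| * `|n|) <= s * B.
    by rewrite ler_pM2l // /B lerD2l ler_wpM2r.
  move=> /le_lt_trans; apply.
  move: sd; rewrite ltr_pdivlMr; last lra.
  by move=> H; apply: le_lt_trans H; rewrite ler_pM2l //; lra.
set phi := fun r => F (s *: (v + r *: n) + q0).
have dlin : forall r, 'd F q0 (s *: (v + r *: n)) = s * (r * c).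
  by move=> r; rewrite linearZ linearD linearZ dFv add0r.
have key : forall r, `|r| <= eps -> `|phi r - s * (r * c)| <= s * (eps * `|c| / 2).
  move=> r re; have := Hf (s *: (v + r *: n)).
  have hr := Hh r re.
  have : `|s *: (v + r *: n)| < r1 by apply: (lt_le_trans hr); rewrite ge_min lexx orbT.
  move=> /[swap] /[apply]; rewrite F0 subr0 dlin => H.
  apply: (le_trans H).
  have : `|s *: (v + r *: n)| <= s * B.
    apply: (le_trans (norm_seg _ _ _ (ltW s0))).
    by rewrite ler_pM2l // /B lerD2l ler_wpM2r.
  move=> H2.
  have : eta * `|s *: (v + r *: n)| <= eta * (s * B) by rewrite ler_pM2l.
  move=> /le_trans; apply.
  rewrite /eta mulrCA ler_pM2l //.
  have B1 : B + 1 != 0 by rewrite gt_eqF //; lra.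
  rewrite (@aux_eq (eps * `|c|) B B1).
  apply: ler_piMr; first by rewrite divr_ge0 ?mulr_ge0 // ltW.
  by rewrite ler_pdivrMr; lra.
have epe : `|eps| <= eps by rewrite ger0_norm // ltW.
have epn : `|- eps| <= eps by rewrite normrN ger0_norm // ltW.
have k1 := key _ epe.
have k2 := key _ epn.
have pos1 : 0 < c * phi eps by apply: (@sign_aux _ s eps) => //.
have pos2 : 0 < (- c) * phi (- eps).
  apply: (@sign_aux _ s eps) => //; first by rewrite oppr_eq0.
  by rewrite mulrN -mulNr normrN.
have prod : phi (- eps) * phi eps < 0.
  have : 0 < (c * phi eps) * ((- c) * phi (- eps)) by apply: mulr_gt0.
  move=> H; rewrite ltNge; apply/negP => H2.
  move: H; rewrite ltNge; apply/negP/negPn.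
  have -> : c * phi eps * (- c * phi (- eps)) = - ((c * c) * (phi (- eps) * phi eps)) by ring.
  by rewrite oppr_le0 mulr_ge0 // -expr2 sqr_ge0.
have [r rin rF] : exists2 r, r \in `[- eps, eps] & phi r = 0.
  apply: IVT; first by rewrite ge0_cp // ltW.
    apply: continuous_in_subspaceT => r rin.
    have rle : `|r| <= eps.
      by move: rin; rewrite inE /= in_itv /= => /andP[a b]; rewrite ler_norml a b.
    have c1 : {for r, continuous (fun r : R => s *: (v + r *: n) + q0)}.
      apply: continuousD; last exact: cst_continuous.
      apply: continuousZl_tmp; apply: continuousD; first exact: cst_continuous.
      exact: scalel_continuous.
    have c2 : {for s *: (v + r *: n) + q0, continuous F}.
      apply: Fc; apply: (lt_le_trans (Hh r rle)); rewrite ge_min lexx //.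
    exact: (continuous_comp c1 c2).
  by apply: sign_change.
exists r => //.
by move: rin; rewrite in_itv /= => /andP[a b]; rewrite ler_norml a b.
Qed.


Lemma dseq (f : V -> R) (x w : V) (S : nat -> R) (W : nat -> V) :
  differentiable f x -> f x = 0 -> (forall k, 0 < S k) -> S @ \oo --> 0 -> W @ \oo --> w ->
  (fun k => f (S k *: W k + x) / S k) @ \oo --> 'd f x w.
Proof.
move=> df fx0 Sp S0 Ww.
have Hd : (fun k => 'd f x (W k)) @ \oo --> 'd f x w.
  by apply: continuous_cvg => //; exact: diff_continuous.
have -> : (fun k => f (S k *: W k + x) / S k) =
   (fun k => (f (S k *: W k + x) / S k - 'd f x (W k))) + (fun k => 'd f x (W k)).
  by apply/funext => k /=; rewrite subrK.
rewrite -[X in _ --> X]add0r; apply: cvgD => //.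
apply/cvgr0Pnorm_lt => e e0.
have e1 : 0 < e / (`|w| + 1) by rewrite divr_gt0 // ltr_pwDr.
have SW : (fun k => S k *: W k) @ \oo --> (0:V).
  by rewrite -(scale0r w); apply: cvgZ.
have H1 := SW _ (frechet df e1).
have H2 : \forall k \near \oo, `|W k - w| < 1.
  by move/cvgrPdist_lt : Ww => /(_ 1 ltr01); apply: filterS => k; rewrite distrC.
near=> k.
have h1 : `|f (S k *: W k + x) - f x - 'd f x (S k *: W k)| <= e / (`|w| + 1) * `|S k *: W k|.
  by near: k; exact: H1.
have h2 : `|W k - w| < 1 by near: k; exact: H2.
rewrite fx0 subr0 linearZ /= in h1.
have -> : f (S k *: W k + x) / S k - 'd f x (W k) = (f (S k *: W k + x) - S k *: 'd f x (W k)) / S k.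
  by rewrite mulrBl /= mulrAC divff ?mul1r // gt_eqF.
rewrite normrM normfV (gtr0_norm (Sp k)) ltr_pdivrMr //.
apply: (le_lt_trans h1).
have hW : `|W k| < `|w| + 1.
  by rewrite -(subrK w (W k)); apply: (le_lt_trans (ler_normD _ _)); rewrite addrC ltrD2l.
rewrite normrZ (gtr0_norm (Sp k)).
by rewrite mulrCA [e * S k]mulrC ltr_pM2l // mulrAC ltr_pdivrMr ?ltr_pwDr // ltr_pM2l.
Unshelve. all: by end_near. Qed.

Lemma core (F G1 G2 h11 h22 h12 h21 k1 k2 : V -> R) (q0 v n : V) (u1 u2 rho : R) :
  differentiable F q0 -> F q0 = 0 -> 'd F q0 v = 0 -> 'd F q0 n != 0 ->
  0 < rho -> (forall h : V, `|h| < rho -> {for h + q0, continuous F}) ->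
  differentiable G1 q0 -> differentiable G2 q0 -> G1 q0 = 0 -> G2 q0 = 0 ->
  'd G1 q0 v = u1 -> 'd G2 q0 v = u2 -> u1 ^+ 2 + u2 ^+ 2 != 0 ->
  {for q0, continuous h11} -> {for q0, continuous h22} ->
  {for q0, continuous h12} -> {for q0, continuous h21} ->
  {for q0, continuous k1} -> {for q0, continuous k2} ->
  (forall h : V, `|h| < rho -> F (h + q0) = 0 ->
     G1 (h + q0) ^+ 2 + G2 (h + q0) ^+ 2 != 0 ->
     h11 (h + q0) * G2 (h + q0) ^+ 2 + h22 (h + q0) * G1 (h + q0) ^+ 2
     - G1 (h + q0) * G2 (h + q0) * (h12 (h + q0) + h21 (h + q0))
     + (k2 (h + q0) * G1 (h + q0) - k1 (h + q0) * G2 (h + q0))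
       * (G1 (h + q0) ^+ 2 + G2 (h + q0) ^+ 2) = 0) ->
  h11 q0 * u2 ^+ 2 + h22 q0 * u1 ^+ 2 - u1 * u2 * (h12 q0 + h21 q0) = 0.
Proof.
move=> dF F0 dFv dFn rho0 Fc dG1 dG2 G10 G20 dG1v dG2v u0 c11 c22 c12 c21 ck1 ck2 Heq.
have ex : forall k : nat, exists sr : R * R, [/\ 0 < sr.1, sr.1 <= harmonic k,
    `|sr.2| <= harmonic k & F (sr.1 *: (v + sr.2 *: n) + q0) = 0].
  move=> k; have [d d0 Hd] := curve dF F0 dFv dFn rho0 Fc (harmonic_gt0 k).
  have hk := harmonic_gt0 k.
  set s := Num.min d (harmonic k) / 2.
  have m0 : 0 < Num.min d (harmonic k) by rewrite lt_min d0 hk.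
  have s0 : 0 < s by rewrite divr_gt0.
  have sm : s < Num.min d (harmonic k) by rewrite /s ltr_pdivrMr //; lra.
  have md : Num.min d (harmonic k) <= d by rewrite ge_min lexx.
  have mh : Num.min d (harmonic k) <= harmonic k by rewrite ge_min lexx orbT.
  have [r r1 r2] := Hd s s0 (lt_le_trans sm md).
  exists (s, r); split => //=.
  exact: ltW (lt_le_trans sm mh).
have [SR HSR] := choice ex.
set S := fun k => (SR k).1.
set Rr := fun k => (SR k).2.
have Sp : forall k, 0 < S k by move=> k; case: (HSR k).
have FS : forall k, F (S k *: (v + Rr k *: n) + q0) = 0 by move=> k; case: (HSR k).
have S0 : S @ \oo --> 0.
  apply: (@squeeze_cvgr _ _ _ _ (cst 0) harmonic); last exact: cvg_harmonic.
    by near=> k; case: (HSR k) => a b _ _; rewrite /S /= ltW.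
  exact: cvg_cst.
have R0 : Rr @ \oo --> 0.
  apply: (@squeeze_cvgr _ _ _ _ (- harmonic) harmonic); last exact: cvg_harmonic.
    by near=> k; case: (HSR k) => _ _ a _; rewrite -ler_norml.
  by rewrite -oppr0; apply: cvgN; exact: cvg_harmonic.
set W := fun k => v + Rr k *: n.
have Wv : W @ \oo --> v.
  rewrite -[X in _ --> X]addr0; apply: cvgD; first exact: cvg_cst.
  by rewrite -(scale0r n); apply: cvgZ => //; exact: cvg_cst.
have SW : (fun k => S k *: W k) @ \oo --> (0:V).
  by rewrite -(scale0r v); apply: cvgZ.
have Pq : (fun k => S k *: W k + q0) @ \oo --> q0.
  by rewrite -[X in _ --> X]add0r; apply: cvgD => //; exact: cvg_cst.
have g1 := dseq dG1 G10 Sp S0 Wv; rewrite dG1v in g1.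
have g2 := dseq dG2 G20 Sp S0 Wv; rewrite dG2v in g2.
set P := fun k => S k *: W k + q0.
have G1P : (fun k => G1 (P k)) @ \oo --> 0.
  by rewrite -G10; apply: continuous_cvg => //; exact: differentiable_continuous.
have G2P : (fun k => G2 (P k)) @ \oo --> 0.
  by rewrite -G20; apply: continuous_cvg => //; exact: differentiable_continuous.
set g1s := fun k => G1 (P k) / S k.
set g2s := fun k => G2 (P k) / S k.
have hP : forall h : V -> R, {for q0, continuous h} -> (fun k => h (P k)) @ \oo --> h q0.
  by move=> h hc; apply: continuous_cvg.
set Phi := fun k => h11 (P k) * (g2s k * g2s k) + h22 (P k) * (g1s k * g1s k)
   - g1s k * g2s k * (h12 (P k) + h21 (P k))
   + (k2 (P k) * G1 (P k) - k1 (P k) * G2 (P k)) * (g1s k * g1s k + g2s k * g2s k).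
have PhiL : Phi @ \oo --> h11 q0 * (u2 * u2) + h22 q0 * (u1 * u1) - u1 * u2 * (h12 q0 + h21 q0)
   + (k2 q0 * 0 - k1 q0 * 0) * (u1 * u1 + u2 * u2).
  apply: cvgD; [apply: cvgB; [apply: cvgD|]|].
  - apply: cvgM; [exact: hP|]; exact: cvgM.
  - apply: cvgM; [exact: hP|]; exact: cvgM.
  - apply: cvgM; [exact: cvgM|]; apply: cvgD; exact: hP.
  - apply: cvgM; [apply: cvgB; apply: cvgM => //; exact: hP|].
    apply: cvgD; exact: cvgM.
rewrite !mulr0 subrr mul0r addr0 in PhiL.
have E1 : \forall k \near \oo, `|S k *: W k| < rho by move/cvgr0Pnorm_lt : SW; apply.
have gg : (fun k => g1s k * g1s k + g2s k * g2s k) @ \oo --> u1 * u1 + u2 * u2.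
  by apply: cvgD; exact: cvgM.
have U0 : 0 < `|u1 * u1 + u2 * u2| by rewrite normr_gt0 -!expr2.
have E2 : \forall k \near \oo, g1s k * g1s k + g2s k * g2s k != 0.
  move/cvgrPdist_lt : gg => /(_ _ U0); apply: filterS => k H.
  by apply/negP => /eqP Z; move: H; rewrite Z subr0 ltxx.
have Fz : \forall k \near \oo, Phi k = 0.
  near=> k.
  have Sk := Sp k.
  have e1 : `|S k *: W k| < rho by near: k.
  have e2 : g1s k * g1s k + g2s k * g2s k != 0 by near: k.
  have hG1 : G1 (P k) = S k * g1s k by rewrite /g1s mulrC divfK // gt_eqF.
  have hG2 : G2 (P k) = S k * g2s k by rewrite /g2s mulrC divfK // gt_eqF.
  have nz : G1 (S k *: W k + q0) ^+ 2 + G2 (S k *: W k + q0) ^+ 2 != 0.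
    rewrite -/(P k) hG1 hG2.
    have -> : (S k * g1s k) ^+ 2 + (S k * g2s k) ^+ 2
       = S k ^+ 2 * (g1s k * g1s k + g2s k * g2s k) by ring.
    by rewrite mulf_neq0 // expf_neq0 // gt_eqF.
  have H := Heq _ e1 (FS k) nz.
  rewrite -/(P k) hG1 hG2 in H.
  have : S k ^+ 2 * Phi k = 0 by rewrite -H /Phi hG1 hG2; ring.
  by move/eqP; rewrite mulf_eq0 expf_eq0 /= (gt_eqF Sk) /= => /eqP.
rewrite !expr2.
set L := (X in X = 0).
case: (eqVneq L 0) => // Lne; exfalso.
have L0 : 0 < `|L| by rewrite normr_gt0.
move/cvgrPdist_lt : PhiL => /(_ _ L0) H.
have : \forall k \near \oo, False.
  near=> k.
  have a : Phi k = 0 by near: k.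
  have b : `|L - Phi k| < `|L| by near: k.
  by rewrite a subr0 ltxx in b.
by move/filter_ex => [].
Unshelve. all: by end_near.
Qed.

Definition ee (l : 'I_3) : V := delta_mx 0 l.

Lemma derive_lin (W : normedModType R) (f : V -> W) p w : differentiable f p ->
  derive f p w = \sum_(l < 3) w 0 l *: derive f p (ee l).
Proof.
move=> df; rewrite deriveE // {1}(row_sum_delta w) linear_sum.
by apply: eq_bigr => l _; rewrite linearZ /= deriveE.
Qed.

Lemma cont_sum n (T : topologicalType) (W : normedModType R) (f : 'I_n -> T -> W) p :
  (forall l, {for p, continuous (f l)}) -> {for p, continuous (fun q => \sum_(l < n) f l q)}.
Proof.
move=> H; rewrite -fct_sumE; elim/big_ind: _ => //.
- exact: cst_continuous.
- by move=> ? ? ? ?; exact: continuousD.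
Qed.

Lemma near_cont (T : topologicalType) (W : normedModType R) (f g : T -> W) p :
  (\forall q \near p, g q = f q) -> {for p, continuous g} -> {for p, continuous f}.
Proof.
move=> fg gc.
have fgp : g p = f p := nbhs_singleton fg.
rewrite /prop_for /continuous_at -fgp.
apply: cvg_trans gc; exact: near_eq_cvg.
Qed.

Lemma diff_coord (f : V -> V) p l : differentiable f p -> differentiable (fun q => f q 0 l) p.
Proof.
move=> df; exact: (differentiable_comp df (differentiable_coord (f p) 0 l)).
Qed.

Lemma derive_coord (f : V -> V) p w l : differentiable f p ->
  derive (fun q => f q 0 l) p w = derive f p w 0 l.
Proof. by move=> df; rewrite (derive_mx (diff_derivable df)) mxE. Qed.

Lemma cont_coord (T : topologicalType) (f : T -> V) p l :
  {for p, continuous f} -> {for p, continuous (fun q => f q 0 l)}.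
Proof. move=> fc; exact: (continuous_comp fc (@coord_continuous R 1 3 0 l (f p))). Qed.

Definition Gh (F : V -> R) (X : V -> V) : V -> R :=
  \sum_(l < 3) (fun p => X p 0 l * derive F p (ee l)).

Lemma Gh_eq F X p : differentiable F p -> vact X F p = Gh F X p.
Proof. by move=> dF; rewrite /vact derive_lin // /Gh fct_sumE. Qed.

Lemma Gh_diff F X p : differentiable X p ->
  (forall l, differentiable (fun q => derive F q (ee l)) p) -> differentiable (Gh F X) p.
Proof.
move=> dX dF; apply: differentiable_sum => l.
by apply: differentiableM => //; exact: diff_coord.
Qed.

Lemma Gh_derive F X p w : differentiable X p ->
  (forall l, differentiable (fun q => derive F q (ee l)) p) ->
  derive (Gh F X) p w = \sum_(l < 3) (X p 0 l * derive (fun q => derive F q (ee l)) p w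
                                    + derive F p (ee l) * derive X p w 0 l).
Proof.
move=> dX dF; rewrite derive_sum; last first.
  move=> l; apply: derivableM; last exact: diff_derivable.
  exact/diff_derivable/diff_coord.
apply: eq_bigr => l _; rewrite deriveM; last 2 first.
- exact/diff_derivable/diff_coord.
- exact: diff_derivable.
by rewrite derive_coord.
Qed.


Definition Hexp (F : V -> R) (X Y : V -> V) : V -> R := fun p =>
  \sum_(l < 3) (X p 0 l * \sum_(m < 3) (Y p 0 m * derive (fun q => derive F q (ee l)) p (ee m))
     + derive F p (ee l) * \sum_(m < 3) (Y p 0 m * derive X p (ee m) 0 l)).

Lemma nearU (U : set V) p : open U -> U p -> \forall q \near p, U q.
Proof. by move=> oU Up; apply: open_nbhs_nbhs; split. Qed.

Lemma H_eq (U : set V) F X Y p : open U -> U p -> CkOn 2 U F -> CkOn 1 U X ->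
  derive (vact X F) p (Y p) = Hexp F X Y p.
Proof.
move=> oU Up [dF dF2] [dX _].
have dFl : forall l, differentiable (fun q => derive F q (ee l)) p.
  by move=> l; case: (dF2 (ee l)) => H _; exact: H.
rewrite (@near_eq_derive _ _ _ _ (Gh F X)); last first.
  by near=> q; apply: Gh_eq; apply: dF; near: q; exact: nearU.
rewrite Gh_derive //; last exact: dX.
apply: eq_bigr => l _; congr (_ * _ + _ * _).
  by rewrite derive_lin.
rewrite derive_lin; last exact: dX.
by rewrite summxE; apply: eq_bigr => m _; rewrite mxE.
Unshelve. all: by end_near. Qed.

Lemma H_cont (U : set V) F X Y q0 : open U -> U q0 -> CkOn 2 U F -> CkOn 1 U X ->
  CkOn 1 U Y -> {for q0, continuous (vact Y (vact X F))}.
Proof.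
move=> oU Uq [dF dF2] [dX cX] [dY cY].
apply: (@near_cont _ _ _ (Hexp F X Y)).
  near=> q.
  have Uq' : U q by near: q; exact: nearU.
  exact: (esym (@H_eq U F X Y q oU Uq' (conj dF dF2) (conj dX cX))).
apply: cont_sum => l; apply: continuousD; apply: continuousM.
- by apply: cont_coord; apply: differentiable_continuous; exact: dX.
- apply: cont_sum => m; apply: continuousM.
    by apply: cont_coord; apply: differentiable_continuous; exact: dY.
  by case: (dF2 (ee l)) => _ H; exact: H.
- by case: (dF2 (ee l)) => H _; apply: differentiable_continuous; exact: H.
- apply: cont_sum => m; apply: continuousM.
    by apply: cont_coord; apply: differentiable_continuous; exact: dY.
  by apply: cont_coord; exact: cX.
Unshelve. all: by end_near. Qed.

End S.

Section S2.
Local Set Implicit Arguments.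
Local Unset Strict Implicit.
Variable R : realType.
Notation V := 'rV[R]_3.
Local Notation ee := (@ee R).

Lemma pairDl (a b c : V) : pair (a + b) c = pair a c + pair b c.
Proof. by rewrite /pair -big_split; apply: eq_bigr => i _; rewrite mxE mulrDl. Qed.
Lemma pairDr (a b c : V) : pair c (a + b) = pair c a + pair c b.
Proof. by rewrite /pair -big_split; apply: eq_bigr => i _; rewrite mxE mulrDr. Qed.
Lemma pairZl (k : R) (a c : V) : pair (k *: a) c = k * pair a c.
Proof. by rewrite /pair mulr_sumr; apply: eq_bigr => i _; rewrite mxE mulrA. Qed.
Lemma pairZr (k : R) (a c : V) : pair c (k *: a) = k * pair c a.
Proof. by rewrite /pair mulr_sumr; apply: eq_bigr => i _; rewrite mxE mulrCA. Qed.
Lemma pairNr (a c : V) : pair c (- a) = - pair c a.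
Proof. by rewrite -scaleN1r pairZr mulN1r. Qed.
Lemma pairNl (a c : V) : pair (- a) c = - pair a c.
Proof. by rewrite -scaleN1r pairZl mulN1r. Qed.
Lemma pairC (a c : V) : pair a c = pair c a.
Proof. by rewrite /pair; apply: eq_bigr => i _; rewrite mulrC. Qed.
Lemma pair_eq0 (a : V) : pair a a = 0 -> a = 0.
Proof.
move=> H; apply/rowP => i; rewrite mxE.
have : a 0 i * a 0 i == 0.
  move: H; rewrite /pair => /eqP; rewrite psumr_eq0; last by move=> j _; rewrite -expr2 sqr_ge0.
  by move/allP => /(_ i (mem_index_enum _)).
by rewrite mulf_eq0 orbb => /eqP.
Qed.

Lemma pair_cont (T : topologicalType) (A B : T -> V) p :
  {for p, continuous A} -> {for p, continuous B} -> {for p, continuous (fun q => pair (A q) (B q))}.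
Proof.
move=> cA cB; apply: cont_sum => i; apply: continuousM; exact: cont_coord.
Qed.

Definition gram (x y : V) := pair x x * pair y y - pair x y * pair y x.

Lemma gram_ne0 (x y : V) : (forall a b : R, a *: x + b *: y = 0 -> a = 0 /\ b = 0) ->
  gram x y != 0.
Proof.
move=> ind; apply/negP => /eqP G0.
have [g0|g0] := eqVneq (pair x x) 0.
  have x0 := pair_eq0 g0.
  have H10 : 1 *: x + 0 *: y = 0 by rewrite x0 scaler0 scale0r addr0.
  by have [/eqP] := ind 1 0 H10; rewrite oner_eq0.
set Z := pair x x *: y + (- pair x y) *: x.
have : pair Z Z = pair x x * gram x y.
  rewrite /Z !pairDl !pairDr !pairZl !pairZr /gram (pairC y x); ring.
rewrite G0 mulr0 => /pair_eq0 Z0.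
have HZ : (- pair x y) *: x + (pair x x) *: y = 0 by rewrite addrC.
have [_ /eqP] := ind _ _ HZ.
by rewrite (negbTE g0).
Qed.


Lemma lie_cont (U : set V) X1 X2 q0 : open U -> U q0 -> CkOn 1 U X1 -> CkOn 1 U X2 ->
  {for q0, continuous (lie X1 X2)}.
Proof.
move=> oU Uq [dX1 cX1] [dX2 cX2].
apply: (near_cont (g := fun p => \sum_(m < 3) X1 p 0 m *: derive X2 p (ee m)
                                 - \sum_(m < 3) X2 p 0 m *: derive X1 p (ee m))).
  near=> q; have Uq' : U q by near: q; exact: nearU.
  by rewrite /lie -!derive_lin //; [exact: dX1 | exact: dX2].
apply: continuousB; apply: cont_sum => m; apply: continuousZ.
- by apply: cont_coord; apply: differentiable_continuous; exact: dX1.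
- exact: cX2.
- by apply: cont_coord; apply: differentiable_continuous; exact: dX2.
- exact: cX1.
Unshelve. all: by end_near. Qed.

Lemma c_cont (U : set V) (X1 X2 X3 om : V -> V) (c1 c2 c3 : V -> R) q0 :
  open U -> U q0 -> CkOn 1 U X1 -> CkOn 1 U X2 -> CkOn 1 U X3 -> CkOn 1 U om ->
  (forall p, U p -> [/\ pair (om p) (X1 p) = 0, pair (om p) (X2 p) = 0 & pair (om p) (X3 p) = 1]) ->
  (forall p, U p -> lie X1 X2 p = - (c1 p *: X1 p + c2 p *: X2 p + c3 p *: X3 p)) ->
  gram (X1 q0) (X2 q0) != 0 ->
  {for q0, continuous c1} /\ {for q0, continuous c2}.
Proof.
move=> oU Uq C1 C2 [dX3 _] [dom _] Hom Hlie G0.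
have cX1 : {for q0, continuous X1} by apply: differentiable_continuous; case: C1 => H _; exact: H.
have cX2 : {for q0, continuous X2} by apply: differentiable_continuous; case: C2 => H _; exact: H.
have cX3 : {for q0, continuous X3} by apply: differentiable_continuous; exact: dX3.
have com : {for q0, continuous om} by apply: differentiable_continuous; exact: dom.
have cl := lie_cont oU Uq C1 C2.
set Y := fun p => pair (om p) (lie X1 X2 p) *: X3 p - lie X1 X2 p.
have cY : {for q0, continuous Y}.
  by apply: continuousB => //; apply: continuousZ => //; exact: pair_cont.
set Gm := fun p => gram (X1 p) (X2 p).
have cG : {for q0, continuous Gm}.
  by apply: continuousB; apply: continuousM; exact: pair_cont.
have GnearP : \forall p \near q0, Gm p != 0.
  have G0' : 0 < `|Gm q0| by rewrite normr_gt0.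
  move: (cG); move/cvgrPdist_lt => /(_ _ G0'); apply: filterS => p H.
  by apply/negP => /eqP Z; move: H; rewrite Z subr0 ltxx.
have Yeq : forall p, U p -> Y p = c1 p *: X1 p + c2 p *: X2 p.
  move=> p Up; have [hh1 hh2 hh3] := Hom p Up.
  rewrite /Y Hlie // pairNr !pairDr !pairZr hh1 hh2 hh3 !mulr0 mulr1 !add0r.
  by rewrite opprK addrC ?scaleNr addrK.
split.
- apply: (near_cont (g := fun p => (pair (Y p) (X1 p) * pair (X2 p) (X2 p)
                             - pair (Y p) (X2 p) * pair (X2 p) (X1 p)) / Gm p)).
    near=> p; have Up : U p by near: p; exact: nearU.
    have Gp : Gm p != 0 by near: p.
    rewrite Yeq // !pairDl !pairZl; move: Gp; rewrite /Gm /gram => Gp.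
    by field.
  apply: continuousM; last exact: continuousV.
  by apply: continuousB; apply: continuousM; exact: pair_cont.
- apply: (near_cont (g := fun p => (pair (Y p) (X2 p) * pair (X1 p) (X1 p)
                             - pair (Y p) (X1 p) * pair (X1 p) (X2 p)) / Gm p)).
    near=> p; have Up : U p by near: p; exact: nearU.
    have Gp : Gm p != 0 by near: p.
    rewrite Yeq // !pairDl !pairZl; move: Gp; rewrite /Gm /gram => Gp.
    by field.
  apply: continuousM; last exact: continuousV.
  by apply: continuousB; apply: continuousM; exact: pair_cont.
Unshelve. all: by end_near. Qed.
End S2.

Lemma min_eq (R : realType) (Q K S : R) : 0 < S ->
  Q / (Num.sqrt S) ^+ 3 + K / Num.sqrt S = 0 -> Q + K * S = 0.
Proof.
move=> S0 H.
set D := Num.sqrt S in H.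
have D0 : 0 < D by rewrite sqrtr_gt0.
have SD : S = D ^+ 2 by rewrite sqr_sqrtr // ltW.
have Dn : D != 0 by rewrite gt_eqF.
have H2 : (Q / D ^+ 3 + K / D) * D ^+ 3 = 0 by rewrite H mul0r.
by rewrite SD -H2; field.
Qed.

Lemma solve1 (R : realType) (a b c d u1 u2 : R) : a * d - b * c != 0 ->
  (d * u1 - b * u2) / (a * d - b * c) * a + (a * u2 - c * u1) / (a * d - b * c) * b = u1.
Proof. by move=> h; field. Qed.
Lemma solve2 (R : realType) (a b c d u1 u2 : R) : a * d - b * c != 0 ->
  (d * u1 - b * u2) / (a * d - b * c) * c + (a * u2 - c * u1) / (a * d - b * c) * d = u2.
Proof. by move=> h; field. Qed.

Lemma key_alg (R : realType) (a b c d : R) :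
  a * d - b * c != 0 ->
  (forall u1 u2 : R, u1 ^+ 2 + u2 ^+ 2 != 0 -> a * u2 ^+ 2 + d * u1 ^+ 2 - u1 * u2 * (c + b) = 0) ->
  [/\ a = 0, d = 0, b = - c, a * d - b * c = c ^+ 2 & 0 < a * d - b * c].
Proof.
move=> D H.
have h10 := H 1 0; have h01 := H 0 1; have h11 := H 1 1.
have n10 : (1:R) ^+ 2 + 0 ^+ 2 != 0 by rewrite expr1n expr0n addr0 oner_eq0.
have n01 : (0:R) ^+ 2 + 1 ^+ 2 != 0 by rewrite expr1n expr0n add0r oner_eq0.
have t : (0:R) < 1 + 1 by lra.
have n11 : (1:R) ^+ 2 + 1 ^+ 2 != 0 by rewrite expr1n gt_eqF.
have d0 : d = 0 by move: (h10 n10); rewrite !expr1n !expr0n; lra.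
have a0 : a = 0 by move: (h01 n01); rewrite !expr1n !expr0n; lra.
have bc : b = - c.
  by move: (h11 n11); rewrite a0 d0 !expr1n; lra.
have E : a * d - b * c = c ^+ 2 by rewrite a0 d0 bc mul0r sub0r mulNr opprK expr2.
split => //.
rewrite E lt_def sqr_ge0 andbT expf_neq0 //.
by apply: contra D => /eqP c0; rewrite E c0 expr0n.
Qed.

Theorem mainTheorem9 (R : realType) (U : set 'rV[R]_3)
  (X1 X2 X3 om : 'rV[R]_3 -> 'rV[R]_3) (c1 c2 c3 : 'rV[R]_3 -> R)
  (F : 'rV[R]_3 -> R) (q0 : 'rV[R]_3) :
  open U -> U q0 ->
  (* smooth orthonormal frame X1, X2 of a contact distribution *)
  SmoothOn U X1 -> SmoothOn U X2 ->
  (forall p, U p -> forall a b c : R,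
      a *: X1 p + b *: X2 p + c *: lie X1 X2 p = 0 -> [/\ a = 0, b = 0 & c = 0]) ->
  (* canonical contact form om : om(Delta) = 0, d om (X1, X2) = 1 *)
  SmoothOn U om ->
  (forall p, U p -> [/\ pair (om p) (X1 p) = 0, pair (om p) (X2 p) = 0
                      & dform om p (X1 p) (X2 p) = 1]) ->
  (* Reeb field X3 *)
  SmoothOn U X3 ->
  (forall p, U p -> [/\ pair (om p) (X3 p) = 1, dform om p (X1 p) (X3 p) = 0
                      & dform om p (X2 p) (X3 p) = 0]) ->
  (* structure functions: [X1,X2] = - (c12^1 X1 + c12^2 X2 + c12^3 X3) *)
  (forall p, U p -> lie X1 X2 p = - (c1 p *: X1 p + c2 p *: X2 p + c3 p *: X3 p)) ->
  (* W = {F = 0} is a C^2 surface *)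
  CkOn 2 U F ->
  (forall p, U p -> F p = 0 -> exists v, derive F p v != 0) ->
  (* W is Delta-minimal *)
  (forall p, U p -> F p = 0 ->
     let D1 := Num.sqrt (vact X1 F p ^+ 2 + vact X2 F p ^+ 2) in
     D1 != 0 ->
     (vact X1 (vact X1 F) p * vact X2 F p ^+ 2
        + vact X2 (vact X2 F) p * vact X1 F p ^+ 2
        - vact X1 F p * vact X2 F p
            * (vact X1 (vact X2 F) p + vact X2 (vact X1 F) p)) / D1 ^+ 3
     + (c2 p * vact X1 F p - c1 p * vact X2 F p) / D1 = 0) ->
  (* q0 is a characteristic point of W *)
  F q0 = 0 -> vact X1 F q0 = 0 -> vact X2 F q0 = 0 ->
  (* q0 is isolated among characteristic points of W *)
  (exists N : set 'rV[R]_3, open N /\ N q0 /\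
     forall q, U q -> N q -> F q = 0 -> vact X1 F q = 0 -> vact X2 F q = 0 -> q = q0) ->
  (* the matrix A = [[a, b], [c, d]], A_ij = X_j (X_i F)(q0) *)
  let a := vact X1 (vact X1 F) q0 in
  let b := vact X2 (vact X1 F) q0 in
  let c := vact X1 (vact X2 F) q0 in
  let d := vact X2 (vact X2 F) q0 in
  a * d - b * c != 0 ->
  [/\ a = 0, d = 0, b = - c, a * d - b * c = c ^+ 2 & 0 < a * d - b * c].

Proof.
move=> oU Uq sX1 sX2 contact som Hom sX3 Hreeb Hlie CF Fnd Hmin Fq0 G1q0 G2q0 Hiso a b c d Dne.
apply: key_alg => // u1 u2 u0.
have CX1 : CkOn 1 U X1 := sX1 1%N.
have CX2 : CkOn 1 U X2 := sX2 1%N.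
have CX3 : CkOn 1 U X3 := sX3 1%N.
have Com : CkOn 1 U om := som 1%N.
have CF' := CF.
case: CF' => dF dF2.
have dX1 := CX1.1; have dX2 := CX2.1.
have dFl : forall p, U p -> forall l, differentiable (fun q => derive F q (@ee R l)) p.
  by move=> p Up l; case: (dF2 (@ee R l)) => H _; exact: H.
have [rho rho0 Hr] : exists2 rho : R, 0 < rho & forall h : 'rV[R]_3, `|h| < rho -> U (h + q0).
  have /nbhs_norm0P [r r0 Hr] : \forall h \near (0 : 'rV[R]_3), U (h + q0).
    have := nearU oU Uq; rewrite (near_shift 0) /=.
    by apply: filterS => h /=; rewrite subr0.
  by exists r => // h hr; exact: Hr.
set Dl := a * d - b * c.
set al := (d * u1 - b * u2) / Dl.
set be := (a * u2 - c * u1) / Dl.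
have eu1 : al * a + be * b = u1 by exact: solve1.
have eu2 : al * c + be * d = u2 by exact: solve2.
set v := al *: X1 q0 + be *: X2 q0.
have dFq := dF q0 Uq.
have dG_eq : forall X Y : 'rV[R]_3 -> 'rV[R]_3, CkOn 1 U X ->
    'd (@Gh R F X) q0 (Y q0) = vact Y (vact X F) q0.
  move=> X Y [dX _].
  rewrite -deriveE; last exact: (Gh_diff (dX q0 Uq) (dFl q0 Uq)).
  symmetry; apply: near_eq_derive.
  near=> q; apply: Gh_eq; apply: dF; near: q; exact: nearU.
have dG1 : differentiable (@Gh R F X1) q0 := Gh_diff (dX1 q0 Uq) (dFl q0 Uq).
have dG2 : differentiable (@Gh R F X2) q0 := Gh_diff (dX2 q0 Uq) (dFl q0 Uq).
have G10 : @Gh R F X1 q0 = 0 by rewrite -Gh_eq.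
have G20 : @Gh R F X2 q0 = 0 by rewrite -Gh_eq.
have dG1v : 'd (@Gh R F X1) q0 v = u1.
  by rewrite /v linearD !linearZ /= !dG_eq.
have dG2v : 'd (@Gh R F X2) q0 v = u2.
  by rewrite /v linearD !linearZ /= !dG_eq.
have dFv : 'd F q0 v = 0.
  rewrite /v linearD !linearZ /= -!deriveE //.
  by move: G1q0 G2q0; rewrite /vact => -> ->; rewrite !scaler0 addr0.
have [n Hn] := Fnd q0 Uq Fq0.
have dFn : 'd F q0 n != 0 by rewrite -deriveE.
have Fc : forall h : 'rV[R]_3, `|h| < rho -> {for h + q0, continuous F}.
  by move=> h hr; apply: differentiable_continuous; apply: dF; exact: Hr.
have c11 := H_cont oU Uq CF CX1 CX1.
have c22 := H_cont oU Uq CF CX2 CX2.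
have c12 := H_cont oU Uq CF CX2 CX1.
have c21 := H_cont oU Uq CF CX1 CX2.
have Hom' : forall p, U p -> [/\ pair (om p) (X1 p) = 0, pair (om p) (X2 p) = 0
                               & pair (om p) (X3 p) = 1].
  by move=> p Up; have [h1 h2 _] := Hom p Up; have [h3 _ _] := Hreeb p Up.
have gram0 : gram (X1 q0) (X2 q0) != 0.
  apply: gram_ne0 => al' be' H.
  have [] := contact q0 Uq al' be' 0; first by rewrite scale0r addr0.
  by move=> -> ->.
have [ck1 ck2] := c_cont oU Uq CX1 CX2 CX3 Com Hom' Hlie gram0.
apply: (core dFq Fq0 dFv dFn rho0 Fc dG1 dG2 G10 G20 dG1v dG2v u0 c11 c22 c12 c21 ck1 ck2).
move=> h hr Fh nz.
have Up := Hr h hr.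
rewrite -!Gh_eq in nz *; try exact: dF.
apply: min_eq.
  by rewrite lt_def nz addr_ge0 // sqr_ge0.
apply: (Hmin _ Up Fh).
by rewrite gt_eqF // sqrtr_gt0 lt_def nz addr_ge0 // sqr_ge0.
Unshelve. all: by end_near.
Qed.
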